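(* Let $N\ge2$ and $\mathcal H_S=\mathbb C^N$. (a) Let $\mathcal E:\mathcal L(\mathcal K)\to\mathcal L(\mathcal R)$ be a channel between finite-dimensional Hilbert spaces that is not constrained by the third law. Then for every state $\sigma$ on $\mathcal H_S$ there exist the following: - some $D\in\mathbb N$; - a channel $\Phi_1:\mathcal L(\mathcal H_S)\to\mathcal L(\mathcal H_S\otimes\mathcal K^{\otimes D})$ that is constrained by the third law; - a channel $\Phi_2:\mathcal L(\mathcal H_S\otimes\mathcal R^{\otimes D})\to\mathcal L(\mathcal H_S)$ that is constrained by the third law. These satisfy $\Phi_2\circ(\mathrm{id}_{\mathcal H_S}\otimes\mathcal E^{\otimes D})\circ\Phi_1(\rho)=\sigma$ for every state $\rho$ on $\mathcal H_S$. (b) Conversely, if a channel $\Psi:\mathcal L(\mathcal H_S)\to\mathcal L(\mathcal H_S)$ is a finite composition of channels that are each constrained by the third law, then $\Psi$ maps every full-rank state to a full-rank state. In particular, no such $\Psi$ maps every state to a fixed pure state.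
   Context: All Hilbert spaces are finite-dimensional and complex. A state is a positive operator of unit trace; it is full-rank if it is positive definite. A channel $\Phi:\mathcal L(\mathcal H)\to\mathcal L(\mathcal K)$ is a completely positive trace-preserving linear map. It is constrained by the third law if $\Phi(\rho)$ is a full-rank state on $\mathcal K$ for every full-rank state $\rho$ on $\mathcal H$. *)

(* Defs.v *)
From HB Require Import structures.
From mathcomp Require Import all_boot all_order all_algebra.
From mathcomp Require Import mxtens.
Set Implicit Arguments. Unset Strict Implicit. Unset Printing Implicit Defensive.
Import Order.TTheory GRing.Theory Num.Theory.
Local Open Scope ring_scope.

Section Quantum.
Variable C : numClosedFieldType.

Definition adjmx m n (A : 'M[C]_(m, n)) : 'M[C]_(n, m) := map_mx Num.conj (A^T).

Definition psdmx n (A : 'M[C]_n) : Prop :=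
  forall x : 'cV[C]_n, 0 <= (adjmx x *m A *m x) 0 0.

Definition pdmx n (A : 'M[C]_n) : Prop :=
  forall x : 'cV[C]_n, x != 0 -> 0 < (adjmx x *m A *m x) 0 0.

Definition is_state n (rho : 'M[C]_n) : Prop := psdmx rho /\ \tr rho = 1.

Definition is_fullrank_state n (rho : 'M[C]_n) : Prop := is_state rho /\ pdmx rho.

Definition is_pure_state n (rho : 'M[C]_n) : Prop := is_state rho /\ \rank rho = 1%N.

(* tensor product of two linear maps on operators, L(C^m) (x) L(C^p) -> L(C^n) (x) L(C^q),
   defined on matrix units and extended linearly; tensor factors are indexed by
   mxtens_index (Kronecker convention of tensmx). *)
Definition tensmap m n p q (Phi : 'M[C]_m -> 'M[C]_n) (Psi : 'M[C]_p -> 'M[C]_q)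
    (X : 'M[C]_(m * p)) : 'M[C]_(n * q) :=
  \sum_(i < m) \sum_(j < m) \sum_(k < p) \sum_(l < p)
     X (mxtens_index (i, k)) (mxtens_index (j, l)) *:
       (Phi (delta_mx i j) *t Psi (delta_mx k l)).

Definition linmap m n (Phi : 'M[C]_m -> 'M[C]_n) : Prop :=
  forall (a : C) (X Y : 'M[C]_m), Phi (a *: X + Y) = a *: Phi X + Phi Y.

Definition compl_pos m n (Phi : 'M[C]_m -> 'M[C]_n) : Prop :=
  forall (a : nat) (X : 'M[C]_(a * m)), psdmx X -> psdmx (tensmap (@id 'M[C]_a) Phi X).

Definition trace_pres m n (Phi : 'M[C]_m -> 'M[C]_n) : Prop :=
  forall X : 'M[C]_m, \tr (Phi X) = \tr X.

Definition channel m n (Phi : 'M[C]_m -> 'M[C]_n) : Prop :=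
  [/\ linmap Phi, trace_pres Phi & compl_pos Phi].

Definition third_law m n (Phi : 'M[C]_m -> 'M[C]_n) : Prop :=
  forall rho : 'M[C]_m, is_fullrank_state rho -> is_fullrank_state (Phi rho).

Fixpoint powdim (k D : nat) : nat :=
  match D with 0 => 1%N | D'.+1 => (powdim k D' * k)%N end.

Fixpoint chanpow k r (E : 'M[C]_k -> 'M[C]_r) (D : nat) :
    'M[C]_(powdim k D) -> 'M[C]_(powdim r D) :=
  match D return 'M[C]_(powdim k D) -> 'M[C]_(powdim r D) with
  | 0 => id
  | D'.+1 => tensmap (@chanpow k r E D') E
  end.

Inductive third_law_composition : forall m n, ('M[C]_m -> 'M[C]_n) -> Prop :=
| tlc_one m n (Phi : 'M[C]_m -> 'M[C]_n) :
    channel Phi -> third_law Phi -> third_law_composition Phi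
| tlc_step m p n (Psi : 'M[C]_m -> 'M[C]_p) (Phi : 'M[C]_p -> 'M[C]_n) :
    third_law_composition Psi -> channel Phi -> third_law Phi ->
    third_law_composition (Phi \o Psi).

End Quantum.
Arguments chanpow {C k r} E D _.

(* Main.v *)
Require Import Defs.
From mathcomp Require Import all_boot all_order all_algebra.
From mathcomp Require Import reals complex.
Import GRing.Theory Num.Theory.
Local Open Scope ring_scope.
From mathcomp Require Import mxtens ring sesquilinear spectral.
From Stdlib Require Import Classical.
Import Order.TTheory.

Section Q.
Set Implicit Arguments. Unset Strict Implicit. Unset Printing Implicit Defensive.
Variable C : numClosedFieldType.

Definition bf n (A : 'M[C]_n) (x y : 'I_n -> C) :=
  \sum_p \sum_q (x p)^* * A p q * y q.

Lemma qfE n (A : 'M[C]_n) (x : 'cV_n) :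
  (adjmx x *m A *m x) 0 0 = bf A (fun p => x p 0) (fun q => x q 0).
Proof.
rewrite /bf mxE exchange_big /=; apply: eq_bigr => q _.
rewrite mxE mulr_suml; apply: eq_bigr => p _.
by rewrite /adjmx !mxE.
Qed.

Lemma sum_tens m n (F : 'I_(m * n) -> C) :
  \sum_e F e = \sum_i \sum_j F (mxtens_index (i, j)).
Proof.
rewrite (reindex (@mxtens_index m n)) /=; last first.
  by exists (@mxtens_unindex m n) => e _; [exact: mxtens_indexK|exact: mxtens_unindexK].
by rewrite pair_big /=; apply: eq_bigr => -[i j].
Qed.

Definition slice m n (x : 'I_(m * n) -> C) (i : 'I_m) : 'I_n -> C :=
  fun s => x (mxtens_index (i, s)).

Lemma bf_tens m n (A : 'M[C]_m) (B : 'M[C]_n) x y :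
  bf (A *t B) x y = \sum_i \sum_j A i j * bf B (slice x i) (slice y j).
Proof.
rewrite /bf sum_tens; apply: eq_bigr => i _.
under eq_bigr => s _ do rewrite sum_tens.
rewrite exchange_big; apply: eq_bigr => j _ /=.
rewrite mulr_sumr; apply: eq_bigr => s _.
rewrite mulr_sumr; apply: eq_bigr => s' _.
by rewrite tensmxE /slice; ring.
Qed.

Lemma sum_delta m (k l : 'I_m) (F : 'I_m -> 'I_m -> C) :
  \sum_i \sum_j (delta_mx k l : 'M[C]_m) i j * F i j = F k l.
Proof.
rewrite (bigD1 k) //= [X in _ + X]big1 => [|i ik]; last first.
  by apply: big1 => j _; rewrite mxE (negbTE ik) mul0r.
rewrite addr0 (bigD1 l) //= [X in _ + X]big1 => [|j jl]; last by rewrite mxE (negbTE jl) andbF mul0r.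
by rewrite mxE !eqxx mul1r addr0.
Qed.


Definition gram (I : finType) (H : I -> I -> C) : Prop :=
  exists (T : finType) (y : T -> I -> C),
    forall u v, H u v = \sum_t (y t u)^* * y t v.

Lemma gram_comp (I J : finType) (f : J -> I) (H : I -> I -> C) :
  gram H -> gram (fun u v => H (f u) (f v)).
Proof. by move=> [T [y hy]]; exists T, (fun t u => y t (f u)) => u v; rewrite hy. Qed.

Lemma gram_ext (I : finType) (H H' : I -> I -> C) :
  gram H -> (forall u v, H' u v = H u v) -> gram H'.
Proof. by move=> [T [y hy]] e; exists T, y => u v; rewrite e hy. Qed.

Lemma gram_mul (I : finType) (H1 H2 : I -> I -> C) :
  gram H1 -> gram H2 -> gram (fun u v => H1 u v * H2 u v).
Proof.
move=> [T1 [y1 h1]] [T2 [y2 h2]].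
exists (T1 * T2)%type, (fun t u => y1 t.1 u * y2 t.2 u) => u v.
rewrite h1 h2 mulr_suml.
rewrite -(pair_big xpredT xpredT (fun t1 t2 => (y1 t1 u * y2 t2 u)^* * (y1 t1 v * y2 t2 v))) /=.
apply: eq_bigr => t1 _.
rewrite mulr_sumr; apply: eq_bigr => t2 _.
by rewrite rmorphM /=; ring.
Qed.

Lemma gram_add (I : finType) (H1 H2 : I -> I -> C) :
  gram H1 -> gram H2 -> gram (fun u v => H1 u v + H2 u v).
Proof.
move=> [T1 [y1 h1]] [T2 [y2 h2]].
exists (T1 + T2)%type, (fun t u => match t with inl t => y1 t u | inr t => y2 t u end) => u v.
by rewrite h1 h2 big_sumType.
Qed.

Lemma gram_scale (I : finType) (c : C) (H : I -> I -> C) :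
  0 <= c -> gram H -> gram (fun u v => c * H u v).
Proof.
move=> c0 [T [y h]]; exists T, (fun t u => sqrtC c * y t u) => u v.
rewrite h mulr_sumr; apply: eq_bigr => t _.
have s0 : 0 <= sqrtC c by rewrite sqrtC_ge0.
have e : sqrtC c * sqrtC c = c by rewrite -expr2 sqrtCK.
by rewrite rmorphM /= (geC0_conj s0) mulrACA e.
Qed.

Lemma gram_rank1 (I : finType) (f : I -> C) : gram (fun u v => (f u)^* * f v).
Proof. by exists 'I_1, (fun _ u => f u) => u v; rewrite big_ord1. Qed.

Lemma gram_eq (I : finType) : gram (fun u v : I => (u == v)%:R).
Proof.
exists I, (fun t u => (t == u)%:R) => u v.
rewrite (bigD1 u) //= big1 => [|t tu]; last by rewrite (negbTE tu) conjC0 mul0r.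
by rewrite eqxx conjC1 mul1r addr0 eq_sym.
Qed.

Lemma gram_congr n (I : finType) (B : 'M[C]_n) (z : I -> 'I_n -> C) :
  gram (fun s s' => B s s') -> gram (fun u v => bf B (z u) (z v)).
Proof.
move=> [T [y h]].
exists T, (fun t u => \sum_s y t s * z u s) => u v.
rewrite /bf.
under eq_bigr => s _ do under eq_bigr => s' _ do rewrite h mulr_sumr mulr_suml.
under eq_bigr => s _ do rewrite exchange_big.
rewrite exchange_big; apply: eq_bigr => t _.
rewrite rmorph_sum /= mulr_suml; apply: eq_bigr => s _.
rewrite mulr_sumr; apply: eq_bigr => s' _.
by rewrite rmorphM /=; ring.
Qed.

Lemma gram_sum_qf n (X : 'M[C]_n) (T : finType) (y : T -> 'I_n -> C) :
  \sum_u \sum_v X u v * (\sum_t (y t u)^* * y t v) =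
  \sum_t (adjmx (\col_u y t u) *m X *m (\col_u y t u)) 0 0.
Proof.
under [RHS]eq_bigr => t _ do rewrite qfE /bf.
rewrite [RHS]exchange_big /=; apply: eq_bigr => u _.
rewrite [RHS]exchange_big /=; apply: eq_bigr => v _.
rewrite mulr_sumr; apply: eq_bigr => t _.
by rewrite !mxE; ring.
Qed.

Lemma gram_psd_sum n (X : 'M[C]_n) (H : 'I_n -> 'I_n -> C) :
  psdmx X -> gram H -> 0 <= \sum_u \sum_v X u v * H u v.
Proof.
move=> pX [T [y h]].
under eq_bigr => u _ do under eq_bigr => v _ do rewrite h.
by rewrite gram_sum_qf; apply: sumr_ge0 => t _; apply: pX.
Qed.

Lemma gram_pd_sum n (X : 'M[C]_n) (H : 'I_n -> 'I_n -> C) u0 :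
  pdmx X -> gram H -> H u0 u0 != 0 -> 0 < \sum_u \sum_v X u v * H u v.
Proof.
move=> pX [T [y h]] hu.
have [t0 yt0] : exists t, y t u0 != 0.
  case: (pickP (fun t => y t u0 != 0)) => [t ht|hn]; first by exists t.
  by move: hu; rewrite h big1 ?eqxx // => t _; move/negbFE: (hn t) => /eqP ->; rewrite mulr0.
under eq_bigr => u _ do under eq_bigr => v _ do rewrite h.
rewrite gram_sum_qf (bigD1 t0) //=.
have pos : forall t, 0 <= (adjmx (\col_u y t u) *m X *m (\col_u y t u)) 0 0.
  move=> t; have [/eqP->|nz] := boolP (\col_u y t u == 0).
    by rewrite mulmx0 mxE.
  by apply/ltW/pX.
apply: ltr_wpDr; first by apply: sumr_ge0 => t _; apply: pos.
apply: pX; apply/eqP => /matrixP/(_ u0 0); rewrite !mxE => /eqP.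
by rewrite (negbTE yt0).
Qed.

Lemma psd_of_gram n (B : 'M[C]_n) : gram (fun u v => B u v) -> psdmx B.
Proof.
move=> [T [y h]] x; rewrite qfE /bf.
under eq_bigr => p _ do under eq_bigr => q _ do rewrite h mulr_sumr mulr_suml.
under eq_bigr => p _ do rewrite exchange_big.
rewrite exchange_big; apply: sumr_ge0 => t _ /=.
have -> : \sum_(i < n) \sum_(i0 < n) (x i 0)^* * ((y t i)^* * y t i0) * x i0 0 =
    (\sum_q y t q * x q 0) * (\sum_q y t q * x q 0)^*.
  rewrite rmorph_sum /= mulr_sumr; apply: eq_bigr => p _.
  rewrite mulr_suml; apply: eq_bigr => q _.
  by rewrite rmorphM /=; ring.
exact: mul_conjC_ge0.
Qed.


Definition dl n (i : 'I_n) : 'I_n -> C := fun p => (p == i)%:R.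

Lemma bfDl n (B : 'M[C]_n) f g h : bf B (fun p => f p + g p) h = bf B f h + bf B g h.
Proof.
rewrite /bf -big_split; apply: eq_bigr => p _ /=.
rewrite -big_split; apply: eq_bigr => q _ /=; rewrite rmorphD /=; ring.
Qed.
Lemma bfDr n (B : 'M[C]_n) f g h : bf B h (fun p => f p + g p) = bf B h f + bf B h g.
Proof.
rewrite /bf -big_split; apply: eq_bigr => p _ /=.
rewrite -big_split; apply: eq_bigr => q _ /=; ring.
Qed.
Lemma bfZl n (B : 'M[C]_n) (c : C) f h : bf B (fun p => c * f p) h = c^* * bf B f h.
Proof.
rewrite /bf mulr_sumr; apply: eq_bigr => p _ /=.
rewrite mulr_sumr; apply: eq_bigr => q _ /=; rewrite rmorphM /=; ring.
Qed.
Lemma bfZr n (B : 'M[C]_n) (c : C) f h : bf B h (fun p => c * f p) = c * bf B h f.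
Proof.
rewrite /bf mulr_sumr; apply: eq_bigr => p _ /=.
rewrite mulr_sumr; apply: eq_bigr => q _ /=; ring.
Qed.
Lemma bf_dl n (B : 'M[C]_n) i j : bf B (dl i) (dl j) = B i j.
Proof.
rewrite /bf (bigD1 i) //= [X in _ + X]big1 => [|p pi]; last first.
  by apply: big1 => q _; rewrite /dl (negbTE pi) conjC0 !mul0r.
rewrite addr0 (bigD1 j) //= [X in _ + X]big1 => [|q qj]; last by rewrite /dl (negbTE qj) mulr0.
by rewrite /dl !eqxx conjC1 mul1r mulr1 addr0.
Qed.

Lemma psd_bf n (B : 'M[C]_n) f : psdmx B -> 0 <= bf B f f.
Proof.
move=> pB; have := pB (\col_p f p); rewrite qfE.
by congr (0 <= _); rewrite /bf; apply: eq_bigr => p _; apply: eq_bigr => q _; rewrite !mxE.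
Qed.

Lemma psd_herm n (B : 'M[C]_n) i j : psdmx B -> B j i = (B i j)^*.
Proof.
move=> pB.
have hP : (B i i)^* = B i i by rewrite -bf_dl geC0_conj // psd_bf.
have hQ : (B j j)^* = B j j by rewrite -bf_dl geC0_conj // psd_bf.
have r1 := psd_bf (fun p => dl i p + dl j p) pB.
rewrite bfDl !bfDr !bf_dl in r1.
have r2 := psd_bf (fun p => dl i p + 'i * dl j p) pB.
rewrite bfDl !bfDr !bfZl !bfZr !bf_dl in r2.
move/geC0_conj: r1; move/geC0_conj: r2.
rewrite !rmorphD !rmorphM /= hP hQ conjCi rmorphN /= conjCi opprK.
set a := B i j; set b := B j i; set P := B i i; set Q := B j j.
move=> e2 e1.
have f1 : a^* + b^* = a + b.
  have -> : a^* + b^* = P + a^* + (b^* + Q) - P - Q by ring.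
  by rewrite e1; ring.
have ii : 'i * 'i = -1 :> C by rewrite -expr2 sqrCi.
have g2 : - 'i * a^* + 'i * b^* = 'i * a - 'i * b.
  have -> : - 'i * a^* + 'i * b^* =
    P + - 'i * a^* + ('i * b^* + 'i * (- 'i * Q)) - P - 'i * (- 'i * Q) by ring.
  rewrite e2; ring.
have f2 : a^* - b^* = b - a.
  have -> : a^* - b^* = - ('i * 'i) * a^* + ('i * 'i) * b^* by rewrite ii; ring.
  have -> : b - a = - ('i * 'i) * b + ('i * 'i) * a by rewrite ii; ring.
  have -> : - ('i * 'i) * a^* + ('i * 'i) * b^* = 'i * (- 'i * a^* + 'i * b^*) by ring.
  rewrite g2; ring.
have : (b - a^*) * 2 = 0.
  have -> : (b - a^*) * 2 = (a + b) + (b - a) - ((a^* + b^*) + (a^* - b^*)) by ring.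
  by rewrite f1 f2 subrr.
move/eqP; rewrite mulf_eq0 pnatr_eq0 orbF subr_eq0 => /eqP.
by [].
Qed.


Lemma psd_hermsym n (B : 'M[C]_n) : psdmx B -> B \is hermsymmx.
Proof.
move=> pB; apply/is_hermitianmxP; rewrite expr0 scale1r.
by apply/matrixP => i j; rewrite !mxE psd_herm.
Qed.

Lemma gram_of_psd n (B : 'M[C]_n) : psdmx B -> gram (fun s s' => B s s').
Proof.
move=> pB.
have /hermitian_normalmx /orthomx_spectralP hB := psd_hermsym pB.
set P := spectralmx B in hB; set d := spectral_diag B in hB.
have uP : P \is unitarymx by apply: spectral_unitarymx.
have G : forall s s', B s s' = \sum_k (P k s)^* * d 0 k * P k s'.
  move=> s s'; rewrite {1}hB invmx_unitary // mul_mx_diag !mxE.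
  by apply: eq_bigr => k _; rewrite !mxE.
have O : forall m k, \sum_s P m s * (P k s)^* = (m == k)%:R.
  move=> m k; move/unitarymxP: uP => /matrixP /(_ m k); rewrite !mxE => <-.
  by apply: eq_bigr => s _; rewrite !mxE.
have D : forall m, 0 <= d 0 m.
  move=> m; have := psd_bf (fun s => (P m s)^*) pB.
  have -> : bf B (fun s => (P m s)^*) (fun s => (P m s)^*) = d 0 m; last by [].
  rewrite /bf.
  under eq_bigr => s _ do under eq_bigr => s' _ do rewrite G conjCK mulr_sumr mulr_suml.
  under eq_bigr => s _ do rewrite exchange_big.
  rewrite exchange_big.
  have H : forall k, \sum_(i < n) \sum_(i0 < n) P m i * ((P k i)^* * d 0 k * P k i0) * (P m i0)^*
     = (m == k)%:R * d 0 k * (k == m)%:R.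
    move=> k; rewrite -!O mulr_suml mulr_suml; apply: eq_bigr => i _.
    rewrite mulr_sumr; apply: eq_bigr => i0 _; ring.
  under eq_bigr => k _ do rewrite H.
  rewrite (bigD1 m) //= big1 ?eqxx ?mul1r ?mulr1 ?addr0 // => k km.
  by rewrite eq_sym (negbTE km) mulr0.
exists 'I_n, (fun k s => sqrtC (d 0 k) * P k s) => s s'.
rewrite G; apply: eq_bigr => k _.
have s0 : 0 <= sqrtC (d 0 k) by rewrite sqrtC_ge0.
have e : sqrtC (d 0 k) * sqrtC (d 0 k) = d 0 k by rewrite -expr2 sqrtCK.
rewrite rmorphM /= (geC0_conj s0); move: (sqrtC (d 0 k)) e => q e.
by rewrite -e; ring.
Qed.


Lemma bf0M n (x y : 'I_n -> C) : bf 0 x y = 0.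
Proof. by rewrite /bf big1 // => p _; rewrite big1 // => q _; rewrite mxE mulr0 mul0r. Qed.
Lemma bfDM n (A B : 'M[C]_n) x y : bf (A + B) x y = bf A x y + bf B x y.
Proof.
rewrite /bf -big_split; apply: eq_bigr => p _ /=.
rewrite -big_split; apply: eq_bigr => q _ /=; rewrite mxE; ring.
Qed.
Lemma bfZM n (c : C) (A : 'M[C]_n) x y : bf (c *: A) x y = c * bf A x y.
Proof.
rewrite /bf mulr_sumr; apply: eq_bigr => p _ /=.
rewrite mulr_sumr; apply: eq_bigr => q _ /=; rewrite mxE; ring.
Qed.
Lemma bf_sumM n (I : Type) (r : seq I) (P : pred I) (F : I -> 'M[C]_n) x y :
  bf (\sum_(i <- r | P i) F i) x y = \sum_(i <- r | P i) bf (F i) x y.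
Proof. exact: (big_morph (fun A => bf A x y) (fun A B => bfDM A B x y) (bf0M x y)). Qed.

Lemma bf_tensmap a m n (Phi : 'M[C]_m -> 'M[C]_n) (X : 'M[C]_(a * m)) x y :
  bf (tensmap (@id 'M[C]_a) Phi X) x y =
  \sum_i \sum_j \sum_k \sum_l X (mxtens_index (i, k)) (mxtens_index (j, l)) *
      bf (Phi (delta_mx k l)) (slice x i) (slice y j).
Proof.
rewrite /tensmap bf_sumM; apply: eq_bigr => i _.
rewrite bf_sumM; apply: eq_bigr => j _.
rewrite bf_sumM; apply: eq_bigr => k _.
rewrite bf_sumM; apply: eq_bigr => l _.
by rewrite bfZM bf_tens sum_delta.
Qed.

Lemma linmap_props m n (F : 'M[C]_m -> 'M[C]_n) : linmap F ->
  [/\ F 0 = 0, forall X Y, F (X + Y) = F X + F Y & forall c X, F (c *: X) = c *: F X].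
Proof.
move=> lF.
have F0 : F 0 = 0.
  have h := lF 1 0 0; rewrite !scale1r addr0 in h.
  have : F 0 - F 0 = F 0 + F 0 - F 0 by rewrite -h.
  by rewrite subrr addrK.
split => //; first by move=> X Y; have := lF 1 X Y; rewrite !scale1r.
by move=> c X; have := lF c X 0; rewrite !addr0 F0 addr0.
Qed.

Lemma linmap_sum m n (F : 'M[C]_m -> 'M[C]_n) (I : Type) (r : seq I) (P : pred I) G :
  linmap F -> F (\sum_(i <- r | P i) G i) = \sum_(i <- r | P i) F (G i).
Proof.
move=> /linmap_props [F0 FD _].
exact: (big_morph F FD F0).
Qed.

Lemma linmap_expand m n (F : 'M[C]_m -> 'M[C]_n) (A : 'M[C]_m) :
  linmap F -> F A = \sum_i \sum_j A i j *: F (delta_mx i j).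
Proof.
move=> lF; have [_ _ FZ] := linmap_props lF.
rewrite {1}(matrix_sum_delta A) linmap_sum //; apply: eq_bigr => i _.
by rewrite linmap_sum //; apply: eq_bigr => j _; rewrite FZ.
Qed.

Lemma linmap_tensmap a m n (Phi : 'M[C]_m -> 'M[C]_n) :
  linmap (tensmap (@id 'M[C]_a) Phi).
Proof.
move=> c X Y; rewrite /tensmap scaler_sumr -big_split; apply: eq_bigr => i _ /=.
rewrite scaler_sumr -big_split; apply: eq_bigr => j _ /=.
rewrite scaler_sumr -big_split; apply: eq_bigr => k _ /=.
rewrite scaler_sumr -big_split; apply: eq_bigr => l _ /=.
by rewrite !mxE scalerA scalerDl.
Qed.

Lemma tensmap_id_tens a m n (F : 'M[C]_m -> 'M[C]_n) (A : 'M[C]_a) (B : 'M[C]_m) :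
  linmap F -> tensmap (@id 'M[C]_a) F (A *t B) = A *t F B.
Proof.
move=> lF; rewrite (linmap_expand B lF).
apply/matrixP => e f.
rewrite -[e](@mxtens_unindexK a n) -[f](@mxtens_unindexK a n).
case: (mxtens_unindex e) => p q; case: (mxtens_unindex f) => p' q'.
rewrite tensmxE /tensmap !summxE.
rewrite (bigD1 p) //= [X in _ + X]big1 => [|i ip]; last first.
  have ip' : (p == i) = false by rewrite eq_sym (negbTE ip).
  rewrite summxE big1 // => j _; rewrite summxE big1 // => k _; rewrite summxE big1 // => l _.
  by rewrite mxE !tensmxE [delta_mx i j _ _]mxE ip' /= mul0r mulr0.
rewrite addr0 summxE (bigD1 p') //= [X in _ + X]big1 => [|j jp]; last first.
  have jp' : (p' == j) = false by rewrite eq_sym (negbTE jp).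
  rewrite summxE big1 // => k _; rewrite summxE big1 // => l _.
  by rewrite mxE !tensmxE [delta_mx p j _ _]mxE jp' andbF /= mul0r mulr0.
rewrite addr0 summxE mulr_sumr; apply: eq_bigr => k _.
rewrite summxE summxE mulr_sumr; apply: eq_bigr => l _.
by rewrite mxE !tensmxE [delta_mx p p' _ _]mxE !eqxx mulr1n mul1r mxE; ring.
Qed.

Lemma tr_tens m n (A : 'M[C]_m) (B : 'M[C]_n) : \tr (A *t B) = \tr A * \tr B.
Proof.
rewrite /mxtrace sum_tens mulr_suml; apply: eq_bigr => i _.
by rewrite mulr_sumr; apply: eq_bigr => j _; rewrite tensmxE.
Qed.


Lemma psd_tens m n (A : 'M[C]_m) (B : 'M[C]_n) : psdmx A -> psdmx B -> psdmx (A *t B).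
Proof.
move=> pA pB x; rewrite qfE bf_tens.
apply: gram_psd_sum pA _.
by apply: gram_congr; apply: gram_of_psd.
Qed.

Lemma bf_col n (B : 'M[C]_n) (f : 'I_n -> C) :
  (adjmx (\col_p f p) *m B *m (\col_p f p)) 0 0 = bf B f f.
Proof.
rewrite qfE /bf; apply: eq_bigr => p _; apply: eq_bigr => q _; by rewrite !mxE.
Qed.

Lemma pd_bf n (B : 'M[C]_n) (f : 'I_n -> C) p : pdmx B -> f p != 0 -> 0 < bf B f f.
Proof.
move=> pB fp; rewrite -bf_col; apply: pB.
by apply/eqP => /matrixP /(_ p 0); rewrite !mxE => /eqP; rewrite (negbTE fp).
Qed.

Lemma psd_of_pd n (B : 'M[C]_n) : pdmx B -> psdmx B.
Proof.
move=> pB x; have [/eqP->|nz] := boolP (x == 0); first by rewrite mulmx0 mxE.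
exact/ltW/pB.
Qed.

Lemma pd_tens m n (A : 'M[C]_m) (B : 'M[C]_n) : pdmx A -> pdmx B -> pdmx (A *t B).
Proof.
move=> pA pB x x0; rewrite qfE bf_tens.
have [e xe] : exists e, x e 0 != 0.
  case: (pickP (fun e => x e 0 != 0)) => [e he|hn]; first by exists e.
  by move: x0; rewrite (_ : x = 0) ?eqxx // ; apply/matrixP => e j; rewrite ord1 mxE; move/negbFE: (hn e) => /eqP.
rewrite -[e](@mxtens_unindexK m n) in xe.
case: (mxtens_unindex e) xe => i s xe.
apply: (@gram_pd_sum _ _ _ i pA).
  by apply: gram_congr; apply/gram_of_psd/psd_of_pd.
by rewrite gt_eqF // (@pd_bf _ _ _ s pB).
Qed.


Lemma sum_dl n (F : 'I_n -> C) a : \sum_m (m == a)%:R * F m = F a.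
Proof.
rewrite (bigD1 a) //= big1 ?addr0 ?eqxx ?mul1r // => m ma.
by rewrite (negbTE ma) mul0r.
Qed.

Lemma gram_proj K (z : 'I_K -> C) : \sum_s (z s)^* * z s = 1 ->
  gram (fun a b => (a == b)%:R - (z a)^* * z b).
Proof.
move=> z1; exists 'I_K, (fun m a => (m == a)%:R - (z m)^* * z a) => a b.
have S4 : \sum_m z m * (z m)^* = 1 by rewrite -z1; apply: eq_bigr => m _; rewrite mulrC.
transitivity (\sum_m ((m == a)%:R * (m == b)%:R - ((m == a)%:R * (z m)^*) * z b
   - ((m == b)%:R * z m) * (z a)^* + (z m * (z m)^*) * ((z a)^* * z b))).
  rewrite big_split /= sumrB sumrB -!mulr_suml !sum_dl S4 mul1r.
  ring.
apply: eq_big => // m _.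
by rewrite rmorphB rmorphM /= conjCK conjC_nat; ring.
Qed.

Lemma bf_one1 n (B : 'M[C]_n) x y :
  bf ((1 : 'M[C]_1) *t B) x y = bf B (slice x 0) (slice y 0).
Proof. by rewrite bf_tens !big_ord1 mxE mul1r. Qed.

Lemma psd_untens1 n (B : 'M[C]_n) : psdmx ((1 : 'M[C]_1) *t B) -> psdmx B.
Proof.
move=> pB x; rewrite qfE.
have := psd_bf (fun e => x (mxtens_unindex e).2 0) pB.
rewrite bf_one1; congr (0 <= _); rewrite /bf /slice.
by apply: eq_bigr => p _; apply: eq_bigr => q _; rewrite !mxtens_indexK.
Qed.

Lemma psd1 : psdmx (1 : 'M[C]_1).
Proof. by apply: psd_of_gram; apply: gram_ext (gram_eq _) _ => u v; rewrite mxE. Qed.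

Lemma pd1 : pdmx (1 : 'M[C]_1).
Proof.
move=> x x0; rewrite qfE /bf !big_ord1 mxE mulr1 mulrC mul_conjC_gt0.
by apply: contra x0 => /eqP h; apply/eqP/matrixP => i j; rewrite !ord1 h mxE.
Qed.

Lemma bf_scalar n (c : C) f : bf (c *: (1%:M : 'M[C]_n)) f f = c * \sum_p (f p)^* * f p.
Proof.
rewrite /bf mulr_sumr; apply: eq_bigr => p _.
rewrite (bigD1 p) //= big1 ?addr0 => [|q qp]; first by rewrite !mxE eqxx mulr1n; ring.
by rewrite !mxE eq_sym (negbTE qp) mulr0n mulr0; ring.
Qed.


Lemma bf_delta n (k l : 'I_n) f g : bf (delta_mx k l) f g = (f k)^* * g l.
Proof.
rewrite /bf (bigD1 k) //= [X in _ + X]big1 => [|p pk]; last first.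
  by apply: big1 => q _; rewrite mxE (negbTE pk) mulr0 mul0r.
rewrite addr0 (bigD1 l) //= [X in _ + X]big1 => [|q ql]; last by rewrite mxE (negbTE ql) andbF mulr0 mul0r.
by rewrite mxE !eqxx mulr1 addr0.
Qed.

Lemma tr_delta n (k l : 'I_n) : \tr (delta_mx k l : 'M[C]_n) = (k == l)%:R.
Proof.
rewrite /mxtrace (bigD1 k) //= big1 => [|p pk]; last by rewrite mxE (negbTE pk).
by rewrite mxE eqxx addr0 /= eq_sym.
Qed.

Lemma flat_sum a m (X : 'M[C]_(a * m)) (G : 'I_(a * m) -> 'I_(a * m) -> C) :
  \sum_i \sum_j \sum_k \sum_l X (mxtens_index (i, k)) (mxtens_index (j, l)) *
     G (mxtens_index (i, k)) (mxtens_index (j, l)) = \sum_u \sum_v X u v * G u v.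
Proof.
rewrite sum_tens; apply: eq_bigr => i _.
under [RHS]eq_bigr => k _ do rewrite sum_tens.
by rewrite exchange_big.
Qed.

Definition wv N K (z : 'I_K -> C) (i : 'I_N) : 'I_(N * K) -> C :=
  fun e => (((mxtens_unindex e).1 == i)%:R * z (mxtens_unindex e).2).

Definition tmeas N K (z : 'I_K -> C) (Y : 'M[C]_(N * K)) : C :=
  \sum_i bf Y (wv z i) (wv z i).

Definition Phi2 N K (z : 'I_K -> C) (sigma tau : 'M[C]_N) (Y : 'M[C]_(N * K)) : 'M[C]_N :=
  (\tr Y - tmeas z Y) *: sigma + tmeas z Y *: tau.

Lemma tmeas_lin N K (z : 'I_K -> C) c (X Y : 'M[C]_(N * K)) :
  tmeas z (c *: X + Y) = c * tmeas z X + tmeas z Y.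
Proof.
rewrite /tmeas mulr_sumr -big_split; apply: eq_bigr => i _ /=.
by rewrite bfDM bfZM.
Qed.

Lemma linmap_Phi2 N K (z : 'I_K -> C) (sigma tau : 'M[C]_N) : linmap (Phi2 z sigma tau).
Proof.
move=> c X Y; rewrite /Phi2 tmeas_lin mxtraceD mxtraceZ.
by apply/matrixP => i j; rewrite !mxE; ring.
Qed.

Lemma trace_pres_Phi2 N K (z : 'I_K -> C) (sigma tau : 'M[C]_N) :
  \tr sigma = 1 -> \tr tau = 1 -> trace_pres (Phi2 z sigma tau).
Proof.
move=> s1 t1 Y; rewrite /Phi2 mxtraceD !mxtraceZ s1 t1; ring.
Qed.

Lemma slice_wv N K (z : 'I_K -> C) (i j : 'I_N) s : slice (wv z i) j s = (j == i)%:R * z s.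
Proof. by rewrite /slice /wv mxtens_indexK. Qed.

Lemma bf_ext n (B : 'M[C]_n) f f' g g' :
  (forall p, f p = f' p) -> (forall p, g p = g' p) -> bf B f g = bf B f' g'.
Proof.
by move=> ef eg; rewrite /bf; apply: eq_bigr => p _; apply: eq_bigr => q _; rewrite ef eg.
Qed.

Lemma gram_W N K (z : 'I_K -> C) : \sum_s (z s)^* * z s = 1 ->
  gram (fun e f : 'I_(N * K) => (e == f)%:R - \sum_i (wv z i e)^* * wv z i f).
Proof.
move=> z1.
have g : gram (fun p q : 'I_N * 'I_K => (p.1 == q.1)%:R * ((p.2 == q.2)%:R - (z p.2)^* * z q.2)).
  apply: (gram_mul (H1 := fun p q : 'I_N * 'I_K => (p.1 == q.1)%:R)
                   (H2 := fun p q : 'I_N * 'I_K => (p.2 == q.2)%:R - (z p.2)^* * z q.2)).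
    exact: (gram_comp fst (gram_eq _)).
  exact: (gram_comp snd (gram_proj z1)).
apply: gram_ext (gram_comp (@mxtens_unindex N K) g) _ => e f.
rewrite -[e](@mxtens_unindexK N K) -[f](@mxtens_unindexK N K).
case: (mxtens_unindex e) => i s; case: (mxtens_unindex f) => j t.
rewrite /wv !mxtens_indexK.
have -> : (mxtens_index (i, s) == mxtens_index (j, t)) = (i == j) && (s == t).
  apply/eqP/andP => [h|[/eqP-> /eqP->] //].
  by have := congr1 (@mxtens_unindex N K) h; rewrite !mxtens_indexK => -[-> ->].
rewrite (bigD1 i) //= big1 => [|i' ii']; last by rewrite eq_sym (negbTE ii') mul0r conjC0 mul0r.
rewrite eqxx addr0 mul1r eq_sym.
by case: (j == i); case: (s == t); rewrite /= ?mul1r ?mul0r ?mulr0 ?subr0 ?sub0r; ring.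
Qed.


Lemma cV_nz n (x : 'cV[C]_n) : x != 0 -> exists p, x p 0 != 0.
Proof.
move=> x0; case: (pickP (fun e => x e 0 != 0)) => [e he|hn]; first by exists e.
by move: x0; rewrite (_ : x = 0) ?eqxx // ; apply/matrixP => e j; rewrite ord1 mxE; move/negbFE: (hn e) => /eqP.
Qed.

Lemma cp_Phi2 N K (z : 'I_K -> C) (sigma tau : 'M[C]_N) :
  \sum_s (z s)^* * z s = 1 -> psdmx sigma -> psdmx tau -> compl_pos (Phi2 z sigma tau).
Proof.
move=> z1 ps pt a X pX x; rewrite qfE bf_tensmap.
set x' := fun p => x p 0.
pose Wf := fun e f : 'I_(N * K) => (e == f)%:R - \sum_i (wv z i e)^* * wv z i f.
pose Vf := fun e f : 'I_(N * K) => \sum_i (wv z i e)^* * wv z i f.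
pose G := fun u v : 'I_(a * (N * K)) =>
  Wf (mxtens_unindex u).2 (mxtens_unindex v).2 *
    bf sigma (slice x' (mxtens_unindex u).1) (slice x' (mxtens_unindex v).1) +
  Vf (mxtens_unindex u).2 (mxtens_unindex v).2 *
    bf tau (slice x' (mxtens_unindex u).1) (slice x' (mxtens_unindex v).1).
have E : forall i j k l, bf (Phi2 z sigma tau (delta_mx k l)) (slice x' i) (slice x' j) =
     G (mxtens_index (i, k)) (mxtens_index (j, l)).
  move=> i j k l; rewrite /G !mxtens_indexK /= /Phi2 bfDM !bfZM tr_delta /tmeas.
  by rewrite /Wf /Vf (eq_bigr _ (fun i' _ => bf_delta k l (wv z i') (wv z i'))).
under eq_bigr => i _ do under eq_bigr => j _ do under eq_bigr => k _ do under eq_bigr => l _ do rewrite E.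
rewrite flat_sum; apply: gram_psd_sum pX _.
rewrite /G; apply: gram_add.
  apply: (gram_mul (H1 := fun u v : 'I_(a * (N * K)) => Wf (mxtens_unindex u).2 (mxtens_unindex v).2)
     (H2 := fun u v => bf sigma (slice x' (mxtens_unindex u).1) (slice x' (mxtens_unindex v).1))).
    exact: (gram_comp (fun u => (mxtens_unindex u).2) (gram_W N z1)).
  exact: (gram_comp (fun u => (mxtens_unindex u).1) (gram_congr (slice x') (gram_of_psd ps))).
apply: (gram_mul (H1 := fun u v : 'I_(a * (N * K)) => Vf (mxtens_unindex u).2 (mxtens_unindex v).2)
   (H2 := fun u v => bf tau (slice x' (mxtens_unindex u).1) (slice x' (mxtens_unindex v).1))).
  apply: (gram_comp (fun u => (mxtens_unindex u).2)).
  by exists 'I_N, (fun i e => wv z i e).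
exact: (gram_comp (fun u => (mxtens_unindex u).1) (gram_congr (slice x') (gram_of_psd pt))).
Qed.


Lemma sum_ge0_pos (I : finType) (F : I -> C) i0 :
  (forall i, 0 <= F i) -> 0 < F i0 -> 0 < \sum_i F i.
Proof.
move=> h p; rewrite (bigD1 i0) //=.
by apply: ltr_wpDr => //; apply: sumr_ge0 => i _.
Qed.

Lemma tl_Phi2 N K (z : 'I_K -> C) (sigma tau : 'M[C]_N) (i0 : 'I_N) g0 :
  \sum_s (z s)^* * z s = 1 -> z g0 != 0 ->
  is_state sigma -> is_fullrank_state tau -> third_law (Phi2 z sigma tau).
Proof.
move=> z1 zg0 [ps trs] [[pt trt] pdt] Y [[pY trY] pdY].
set t := tmeas z Y.
have tpos : 0 < t.
  apply: (@sum_ge0_pos _ _ i0); first by move=> i; apply: psd_bf.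
  apply: (@pd_bf _ _ _ (mxtens_index (i0, g0)) pdY).
  by rewrite /wv mxtens_indexK /= eqxx mul1r.
have dpos : 0 <= \tr Y - t.
  have -> : \tr Y - t = \sum_e \sum_f Y e f *
       ((e == f)%:R - \sum_i (wv z i e)^* * wv z i f).
    rewrite /t /tmeas /mxtrace /bf.
    under [RHS]eq_bigr => e _ do under eq_bigr => f _ do rewrite mulrBr.
    under [RHS]eq_bigr => e _ do rewrite sumrB.
    rewrite sumrB; congr (_ - _).
      by apply: eq_bigr => e _; rewrite (bigD1 e) //= eqxx mulr1 big1 ?addr0 // => f fe; rewrite eq_sym (negbTE fe) mulr0.
    rewrite exchange_big; apply: eq_bigr => e _.
    rewrite exchange_big; apply: eq_bigr => f _.
    by rewrite mulr_sumr; apply: eq_bigr => i _; ring.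
  by apply: gram_psd_sum pY _; apply: gram_W.
have trP := trace_pres_Phi2 z trs trt Y.
split; first split.
- move=> x; rewrite qfE /Phi2 bfDM !bfZM -/t.
  by apply: addr_ge0; apply: mulr_ge0 => //; [apply: psd_bf | apply: ltW | apply: psd_bf].
- by rewrite trP.
- move=> x x0; rewrite qfE /Phi2 bfDM !bfZM -/t.
  have [p xp] := cV_nz x0.
  apply: ltr_wpDl; first by apply: mulr_ge0 => //; apply: psd_bf.
  by apply: mulr_gt0 => //; apply: (pd_bf (p := p) pdt).
Qed.

Lemma Phi2_comp N K (z : 'I_K -> C) (sigma tau rho : 'M[C]_N) (om : 'M[C]_K) :
  \tr rho = 1 -> \tr om = 1 -> bf om z z = 0 -> Phi2 z sigma tau (rho *t om) = sigma.
Proof.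
move=> tr1 to1 b0; rewrite /Phi2.
have -> : tmeas z (rho *t om) = 0.
  rewrite /tmeas big1 // => i _; rewrite bf_tens big1 // => p _; rewrite big1 // => q _.
  rewrite (@bf_ext _ _ _ (fun s => (p == i)%:R * z s) _ (fun s => (q == i)%:R * z s));
    try by move=> s; rewrite slice_wv.
  by rewrite bfZl bfZr b0 !mulr0.
by rewrite tr_tens tr1 to1 mulr1 subr0 scale1r scale0r addr0.
Qed.


Definition Phi1 N K (B0 : 'M[C]_K) (Y : 'M[C]_N) : 'M[C]_(N * K) := Y *t B0.

Lemma linmap_Phi1 N K (B0 : 'M[C]_K) : linmap (@Phi1 N K B0).
Proof.
move=> c X Y; apply/matrixP => e f; rewrite /Phi1.
rewrite -[e](@mxtens_unindexK N K) -[f](@mxtens_unindexK N K).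
case: (mxtens_unindex e) => p q; case: (mxtens_unindex f) => p' q'.
rewrite [RHS]mxE [X in _ = X + _]mxE !tensmxE !mxE; ring.
Qed.

Lemma cp_Phi1 N K (B0 : 'M[C]_K) : psdmx B0 -> compl_pos (@Phi1 N K B0).
Proof.
move=> pB a X pX x; rewrite qfE bf_tensmap.
set x' := fun p => x p 0.
pose zz := fun u : 'I_(a * N) => slice x' (mxtens_unindex u).1.
have E : forall i j k l, bf (Phi1 B0 (delta_mx k l)) (slice x' i) (slice x' j) =
   bf B0 (slice (zz (mxtens_index (i, k))) (mxtens_unindex (mxtens_index (i, k))).2)
         (slice (zz (mxtens_index (j, l))) (mxtens_unindex (mxtens_index (j, l))).2).
  by move=> i j k l; rewrite /zz !mxtens_indexK /Phi1 bf_tens sum_delta.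
under eq_bigr => i _ do under eq_bigr => j _ do under eq_bigr => k _ do under eq_bigr => l _ do rewrite E.
rewrite (flat_sum X (fun u v => bf B0 (slice (zz u) (mxtens_unindex u).2) (slice (zz v) (mxtens_unindex v).2))).
apply: gram_psd_sum pX _.
exact: (gram_congr (fun u => slice (zz u) (mxtens_unindex u).2) (gram_of_psd pB)).
Qed.

Lemma tl_Phi1 N K (B0 : 'M[C]_K) : is_fullrank_state B0 -> third_law (@Phi1 N K B0).
Proof.
move=> [[pB tB] pdB] Y [[pY tY] pdY]; rewrite /Phi1.
split; first split.
- exact: psd_tens.
- by rewrite tr_tens tY tB mulr1.
- exact: pd_tens.
Qed.


Lemma state_tau N : (0 < N)%N -> is_fullrank_state ((N%:R)^-1 *: (1%:M : 'M[C]_N)).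
Proof.
move=> hN.
have Npos : 0 < (N%:R : C)^-1 by rewrite invr_gt0 ltr0n.
split; first split.
- by move=> x; rewrite qfE bf_scalar; apply: mulr_ge0; [apply: ltW | apply: sumr_ge0 => p _; rewrite mulrC mul_conjC_ge0].
- by rewrite mxtraceZ mxtrace1 mulVf // pnatr_eq0 -lt0n.
- move=> x x0; rewrite qfE bf_scalar; apply: mulr_gt0 => //.
  have [p xp] := cV_nz x0.
  apply: (@sum_ge0_pos _ _ p) => [q|]; rewrite mulrC; [exact: mul_conjC_ge0|].
  by rewrite mul_conjC_gt0.
Qed.

Lemma part_a N k r (E : 'M[C]_k -> 'M[C]_r) : (0 < N)%N ->
  channel E -> ~ third_law E ->
  forall sigma : 'M[C]_N, is_state sigma ->
  exists (D : nat) (Phi1 : 'M[C]_N -> 'M[C]_(N * powdim k D))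
         (Phi2 : 'M[C]_(N * powdim r D) -> 'M[C]_N),
    [/\ channel Phi1, third_law Phi1, channel Phi2, third_law Phi2 &
        forall rho : 'M[C]_N, is_state rho ->
          Phi2 (tensmap (@id 'M[C]_N) (chanpow E D) (Phi1 rho)) = sigma].
Proof.
move=> hN [lE tpE cpE] ntl sigma [ps trs].
have [rho0 h0] := not_all_ex_not _ _ ntl.
have [[[pr0 tr0] pdr0] nfr] := imply_to_and _ _ h0.
set om := E rho0.
have pom : psdmx om.
  apply: psd_untens1; rewrite -tensmap_id_tens //.
  by apply: cpE; apply: psd_tens => //; apply: psd1.
have tom : \tr om = 1 by rewrite /om tpE.
have npd : ~ pdmx om by move=> pd; apply: nfr.
have [x hx] := not_all_ex_not _ _ npd.
have [x0 nq] := imply_to_and _ _ hx.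
have q0 : bf om (fun p => x p 0) (fun p => x p 0) = 0.
  have := pom x; rewrite le0r qfE => /orP[/eqP //|h].
  by exfalso; apply: nq; rewrite qfE.
have [s0 xs0] := cV_nz x0.
set c := \sum_s (x s 0)^* * x s 0.
have cpos : 0 < c.
  apply: (@sum_ge0_pos _ _ s0) => [q|]; rewrite mulrC; [exact: mul_conjC_ge0|].
  by rewrite mul_conjC_gt0.
set lam := (sqrtC c)^-1.
have lam0 : 0 <= lam by rewrite invr_ge0 sqrtC_ge0 ltW.
have lam2 : lam * lam * c = 1.
  rewrite /lam -invfM -expr2 sqrtCK mulVf //; exact: lt0r_neq0.
pose v := fun s => lam * x s 0.
have v1 : \sum_s (v s)^* * v s = 1.
  rewrite -lam2 /c mulr_sumr; apply: eq_bigr => s _.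
  by rewrite /v rmorphM /= (geC0_conj lam0); ring.
have vq : bf om v v = 0 by rewrite /v bfZl bfZr q0 !mulr0.
have vs0 : v s0 != 0.
  by rewrite /v mulf_neq0 // invr_eq0 sqrtC_eq0 lt0r_neq0.
pose z := fun g : 'I_(1 * r) => v (mxtens_unindex g).2.
have z1 : \sum_g (z g)^* * z g = 1.
  by rewrite sum_tens big_ord1 -v1; apply: eq_bigr => s _; rewrite /z mxtens_indexK.
have zg0 : z (mxtens_index (ord0, s0)) != 0 by rewrite /z mxtens_indexK.
pose B0 := (1 : 'M[C]_1) *t rho0.
have fB0 : is_fullrank_state B0.
  split; first split.
  - by apply: psd_tens => //; apply: psd1.
  - by rewrite tr_tens tr0 mxtrace1 mul1r.
  - by apply: pd_tens => //; apply: pd1.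
have ftau := state_tau hN.
set tau := (N%:R)^-1 *: _ in ftau.
have [[ptau ttau] pdtau] := ftau.
exists 1%N, (@Phi1 N _ B0), (Phi2 z sigma tau).
split.
- split; first exact: linmap_Phi1.
    by move=> Y; rewrite /Phi1 tr_tens (proj2 (proj1 fB0)) mulr1.
  exact: cp_Phi1 (proj1 (proj1 fB0)).
- exact: tl_Phi1.
- split; first exact: linmap_Phi2.
    exact: trace_pres_Phi2.
  exact: cp_Phi2.
- exact: (@tl_Phi2 _ _ _ _ _ (Ordinal hN) _ z1 zg0).
move=> rho [_ trr].
change (Phi2 z sigma tau (tensmap (@id 'M[C]_N) (tensmap (@id 'M[C]_1) E) (Phi1 B0 rho)) = sigma).
rewrite /Phi1 tensmap_id_tens; last exact: linmap_tensmap.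
rewrite /B0 tensmap_id_tens //.
apply: Phi2_comp => //; first by rewrite tr_tens mxtrace1 mul1r.
rewrite bf_one1 -vq; apply: bf_ext => s; by rewrite /slice /z mxtens_indexK.
Qed.


Lemma tlc_third m n (Phi : 'M[C]_m -> 'M[C]_n) :
  third_law_composition Phi -> third_law Phi.
Proof.
elim=> {m n Phi} [m n Phi _ tl //|m p n Psi Phi _ IH _ tl] rho fr.
exact/tl/IH.
Qed.

Lemma pd_rank n (A : 'M[C]_n) : pdmx A -> \rank A = n.
Proof.
move=> pA; apply/eqP; rewrite eqn_leq rank_leq_col /=.
have : \rank (kermx A) == 0%N.
  rewrite mxrank_eq0; apply/eqP/matrixP => i j; rewrite mxE.
  set u := row i (kermx A).
  have uA : u *m A = 0 by rewrite /u -row_mul mulmx_ker row0.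
  apply/eqP; apply: contraT => nz.
  have unz : adjmx u != 0.
    apply: contraNneq nz => /matrixP /(_ j 0); rewrite !mxE => /eqP.
    by rewrite conjC_eq0 => /eqP ->.
  have := pA _ unz.
  have -> : adjmx (adjmx u) = u by apply/matrixP => a b; rewrite !mxE conjCK.
  by rewrite uA mul0mx mxE ltxx.
by rewrite mxrank_ker subn_eq0.
Qed.

Lemma part_b N (hN : (2 <= N)%N) (Psi : 'M[C]_N -> 'M[C]_N) :
  third_law_composition Psi ->
  (forall rho : 'M[C]_N, is_fullrank_state rho -> is_fullrank_state (Psi rho))
  /\ ~ (exists tau : 'M[C]_N,
          is_pure_state tau /\ forall rho : 'M[C]_N, is_state rho -> Psi rho = tau).
Proof.
move=> /tlc_third tl; split => // -[tau [[_ rk] h]].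
have hN0 : (0 < N)%N by apply: leq_trans hN.
have ft := @state_tau N hN0.
have := tl _ ft; rewrite h; last exact: ft.1.
move=> [_ /pd_rank]; rewrite rk => eN.
by move: hN; rewrite -eN.
Qed.

End Q.

Theorem mainTheorem10 (R : realType) (N : nat) (hN : (2 <= N)%N) :
  (* (a) *)
  (forall (k r : nat) (E : 'M[R[i]]_k -> 'M[R[i]]_r),
      channel E -> ~ third_law E ->
      forall sigma : 'M[R[i]]_N, is_state sigma ->
      exists (D : nat) (Phi1 : 'M[R[i]]_N -> 'M[R[i]]_(N * powdim k D))
             (Phi2 : 'M[R[i]]_(N * powdim r D) -> 'M[R[i]]_N),
        [/\ channel Phi1, third_law Phi1, channel Phi2, third_law Phi2 &
            forall rho : 'M[R[i]]_N, is_state rho ->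
              Phi2 (tensmap (@id 'M[R[i]]_N) (chanpow E D) (Phi1 rho)) = sigma])
  /\
  (* (b) *)
  (forall Psi : 'M[R[i]]_N -> 'M[R[i]]_N,
      third_law_composition Psi ->
      (forall rho : 'M[R[i]]_N, is_fullrank_state rho -> is_fullrank_state (Psi rho))
      /\ ~ (exists tau : 'M[R[i]]_N,
              is_pure_state tau /\ forall rho : 'M[R[i]]_N, is_state rho -> Psi rho = tau)).
Proof.
split.
  move=> k r E cE ntl sigma ss.
  apply: part_a => //; exact: leq_trans hN.
by move=> Psi; apply: part_b.
Qed.
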